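(* Let $n\ge0$ and run the Tiden–Arnborg algorithm on $\sigma(n)$, performing sum transformations level by level. At each level $k<n+3$, the sum transformation is applied $2^k-1$ times.
   Context: Variables are $T$, $x_s$, $y_s$ with $s$ a string over $\{1,2\}$ ($x=x_\varepsilon$, $y=y_\varepsilon$); the level of $x_s$ or $y_s$ is $|s|+1$, and a sum transformation is said to be at level $k$ if it is applied at a peak of level $k$. For $n\ge0$, $\sigma(n)$ consists of, for all $0\le i\le n$: $x_{1^i}=^?x_{1^{i+1}}+x_{1^i2}$, $y_{2^i}=^?y_{2^i1}+y_{2^{i+1}}$, $y_{2^i1}=^?T\times x_{1^i2}$, $x=^?T\times y$, $x_{1^{i+1}}=^?x_{1^{i+2}}+x_{1^{i+1}2}$; its variables occupy levels $1,\dots,n+3$. A variable $U_i$ ($U\in\{x,y\}$) is a peak if the system contains both $U_i=^?U_{i1}+U_{i2}$ and $U_i=^?T\times W_j$. A sum transformation at a peak $U_i$ replaces $U_i=^?U_{i1}+U_{i2}$ by $W_j=^?W_{j1}+W_{j2}$, $U_{i1}=^?T\times W_{j1}$, $U_{i2}=^?T\times W_{j2}$ (keeping $U_i=^?T\times W_j$), with $W_{j1},W_{j2}$ identified with the existing children of $W_j$ if $W_j$ already has a sum equation. The Tiden–Arnborg algorithm (for $x\times(y+z)=x\times y+x\times z$) applies sum transformations as long as possible, completing all those at one level before the next. *)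

(* Defs.v *)
From Stdlib Require Import List Arith.
Import ListNotations.

Inductive digit := d1 | d2.

(* the two families of variables x_s and y_s (T is a fixed constant) *)
Inductive letter := Lx | Ly.

(* A variable U_s is a pair (letter, string); its level is |s|+1. *)
Definition level (s : list digit) : nat := length s + 1.

(* Equations:
   ESum u s        stands for   U_s =? U_{s1} + U_{s2}
   EProd u s w j   stands for   U_s =? T x W_j                              *)
Inductive eqn :=
  | ESum  (u : letter) (s : list digit)
  | EProd (u : letter) (s : list digit) (w : letter) (j : list digit).

Definition system := eqn -> Prop.

Definition ones (i : nat) : list digit := repeat d1 i.
Definition twos (i : nat) : list digit := repeat d2 i.

Definition sigma (n : nat) : system := fun e =>
  exists i, i <= n /\
    (e = ESum Lx (ones i) \/
     e = ESum Ly (twos i) \/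
     e = EProd Ly (twos i ++ [d1]) Lx (ones i ++ [d2]) \/
     e = EProd Lx [] Ly [] \/
     e = ESum Lx (ones (S i))).

Definition peak_at (k : nat) (E : system) (u : letter) (s : list digit)
    (w : letter) (j : list digit) : Prop :=
  E (ESum u s) /\ E (EProd u s w j) /\ level s = k.

Definition no_peak (k : nat) (E : system) : Prop :=
  ~ exists u s w j, peak_at k E u s w j.

(* Sum transformation at the peak U_s (with U_s = T x W_j): remove
   U_s = U_{s1}+U_{s2}, add W_j = W_{j1}+W_{j2} (identified with the existing
   one if present, sets have no duplicates), U_{s1} = T x W_{j1},
   U_{s2} = T x W_{j2}; U_s = T x W_j is kept. *)
Definition sum_transform (E : system) (u : letter) (s : list digit)
    (w : letter) (j : list digit) : system := fun e =>
  (E e /\ e <> ESum u s) \/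
  e = ESum w j \/
  e = EProd u (s ++ [d1]) w (j ++ [d1]) \/
  e = EProd u (s ++ [d2]) w (j ++ [d2]).

Inductive steps (k : nat) (E : system) : nat -> system -> Prop :=
  | steps0 : steps k E 0 E
  | stepsS : forall m E' u s w j,
      steps k E m E' -> peak_at k E' u s w j ->
      steps k E (S m) (sum_transform E' u s w j).

Inductive levels_done (n : nat) : nat -> system -> Prop :=
  | done0 : levels_done n 0 (sigma n)
  | doneS : forall k E m E',
      levels_done n k E -> steps (S k) E m E' -> no_peak (S k) E' ->
      levels_done n (S k) E'.

(* Main.v *)
Require Import Defs.
From Stdlib Require Import List Arith Lia.
Import ListNotations.

Fixpoint ff (s : list digit) : list digit :=
  match s with [] => [] | d1 :: t => d2 :: t | d2 :: t => d1 :: ff t end.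
Definition hh (p : letter * list digit) : letter * list digit :=
  match p with (Lx, s) => (Ly, s) | (Ly, s) => (Lx, ff s) end.
Fixpoint pp (K i : nat) : letter * list digit :=
  match i with 0 => (Lx, ones K) | S i => hh (pp K i) end.
Fixpoint val (s : list digit) : nat :=
  match s with [] => 0 | d1 :: t => 1 + 2 * val t | d2 :: t => 2 * val t end.

Lemma twos_ne a t K : twos K <> twos a ++ d1 :: t.
Proof.
  intro H. assert (In d1 (twos K)) as Hi.
  { rewrite H. apply in_or_app. right. left. reflexivity. }
  unfold twos in Hi. apply repeat_spec in Hi. discriminate.
Qed.

Lemma ff_dec a t : ff (twos a ++ d1 :: t) = ones a ++ d2 :: t.
Proof. unfold twos, ones in *; induction a; simpl; [reflexivity| now rewrite IHa]. Qed.

Lemma ff_len s : length (ff s) = length s.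
Proof. induction s as [|[] t IH]; simpl; auto. Qed.

Lemma decomp s : s = twos (length s) \/ exists a t, s = twos a ++ d1 :: t.
Proof.
  induction s as [|[] t IH].
  - left; reflexivity.
  - right. exists 0, t. reflexivity.
  - destruct IH as [H|[a [t' H]]].
    + left. simpl. unfold twos in *; simpl. f_equal. exact H.
    + right. exists (S a), t'. rewrite H. reflexivity.
Qed.

Lemma val_f s : 1 <= val s -> val (ff s) = val s - 1.
Proof. induction s as [|[] t IH]; simpl; intros; try lia.
  all: try (rewrite IH; lia). Qed.

Lemma val_ones K : val (ones K) = 2 ^ K - 1.
Proof. induction K; simpl; auto. unfold ones in IHK. rewrite IHK.
  pose proof (Nat.pow_nonzero 2 K). lia. Qed.

Lemma val_twos K : val (twos K) = 0.
Proof. induction K; simpl; auto. unfold twos in IHK. rewrite IHK. lia. Qed.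

Lemma val_lt s : val s < 2 ^ length s.
Proof. induction s as [|[] t IH]; simpl; lia. Qed.

Lemma val_inj s s' : length s = length s' -> val s = val s' -> s = s'.
Proof.
  revert s'; induction s as [|a t IH]; intros [|b t'] Hl Hv; simpl in *; try discriminate; auto.
  destruct a, b; simpl in Hv; try lia; f_equal; apply IH; lia.
Qed.

Lemma pp_len K i : length (snd (pp K i)) = K.
Proof.
  induction i; simpl. - apply repeat_length.
  - destruct (pp K i) as [[] s]; simpl in *; auto. now rewrite ff_len.
Qed.

Lemma pp_closed K q : q < 2 ^ K -> exists s, length s = K /\ val s = 2 ^ K - 1 - q /\
  pp K (2 * q) = (Lx, s) /\ pp K (S (2 * q)) = (Ly, s).
Proof.
  induction q; intros Hq.
  - exists (ones K). split; [apply repeat_length|]. rewrite val_ones. split; [lia|]. auto.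
  - destruct IHq as [s [Hl [Hv [H1 H2]]]]; [lia|].
    exists (ff s). rewrite ff_len, val_f by lia. repeat split; try lia.
    + replace (2 * S q) with (S (S (2 * q))) by lia. simpl. simpl in H2. rewrite H2. reflexivity.
    + replace (S (2 * S q)) with (S (S (S (2 * q)))) by lia. simpl. simpl in H2. rewrite H2. reflexivity.
Qed.

Definition NN (K : nat) := 2 ^ S K - 1.

Lemma pp_N K : pp K (NN K) = (Ly, twos K).
Proof.
  unfold NN. pose proof (Nat.pow_nonzero 2 K).
  destruct (pp_closed K (2 ^ K - 1)) as [s [Hl [Hv [_ H2]]]]; [lia|].
  replace (2 ^ S K - 1) with (S (2 * (2 ^ K - 1))) by (simpl; lia).
  rewrite H2. f_equal. apply val_inj. unfold twos; rewrite repeat_length; auto.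
  rewrite val_twos. lia.
Qed.

Lemma pp_prod K i : i < NN K ->
  (exists s, length s = K /\ pp K i = (Lx, s) /\ pp K (S i) = (Ly, s)) \/
  (exists a t, a + 1 + length t = K /\ pp K i = (Ly, twos a ++ d1 :: t) /\
      pp K (S i) = (Lx, ones a ++ d2 :: t)).
Proof.
  unfold NN; simpl; intros Hi.
  destruct (Nat.Even_or_Odd i) as [[q Hq]|[q Hq]]; subst i.
  - left. destruct (pp_closed K q) as [s [Hl [Hv [H1 H2]]]]; [lia|]. eauto.
  - right. destruct (pp_closed K q) as [s [Hl [Hv [H1 H2]]]]; [lia|].
    destruct (decomp s) as [Hs|[a [t Hs]]].
    + exfalso. rewrite Hs, val_twos in Hv. lia.
    + exists a, t. replace (2 * q + 1) with (S (2 * q)) by lia.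
      split; [|split].
      * rewrite <- Hl, Hs, length_app. unfold twos; rewrite repeat_length. simpl. lia.
      * now rewrite H2, Hs.
      * change (hh (pp K (S (2 * q))) = (Lx, ones a ++ d2 :: t)). rewrite H2. simpl. now rewrite Hs, ff_dec.
Qed.

Lemma pp_ne K i : i < NN K -> pp K i <> (Ly, twos K).
Proof.
  intros Hi. destruct (pp_prod K i Hi) as [[s [_ [H _]]]|[a [t [_ [H _]]]]]; rewrite H.
  - discriminate.
  - intro E. injection E. intro E'. symmetry in E'. now apply twos_ne in E'.
Qed.

Lemma pp_surj_x K s : length s = K -> exists i, i < NN K /\ pp K i = (Lx, s) /\ pp K (S i) = (Ly, s).
Proof.
  intros Hl. pose proof (val_lt s). rewrite Hl in H.
  destruct (pp_closed K (2 ^ K - 1 - val s)) as [s' [Hl' [Hv [H1 H2]]]]; [lia|].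
  assert (s' = s) by (apply val_inj; lia). subst s'.
  exists (2 * (2 ^ K - 1 - val s)). unfold NN; simpl. split; [lia|]. auto.
Qed.

Lemma pp_surj_y K s : length s = K -> s <> twos K -> exists i, i < NN K /\ pp K i = (Ly, s).
Proof.
  intros Hl Hne. pose proof (val_lt s). rewrite Hl in H.
  assert (val s <> 0).
  { intro Hv. apply Hne. rewrite <- Hl. apply val_inj. unfold twos; now rewrite repeat_length.
    now rewrite val_twos. }
  destruct (pp_closed K (2 ^ K - 1 - val s)) as [s' [Hl' [Hv [H1 H2]]]]; [lia|].
  assert (s' = s) by (apply val_inj; lia). subst s'.
  exists (S (2 * (2 ^ K - 1 - val s))). unfold NN; simpl. split; [lia|]. auto.
Qed.

Definition D (n K : nat) (e : eqn) : Prop :=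
  (exists i, i <= n /\ e = ESum Ly (twos i)) \/
  (exists i, K <= i <= n + 1 /\ e = ESum Lx (ones i)) \/
  (exists s, length s <= K /\ e = EProd Lx s Ly s) \/
  (exists a t, a <= n /\ (t = [] \/ a + 1 + length t <= K) /\
      e = EProd Ly (twos a ++ d1 :: t) Lx (ones a ++ d2 :: t)).

Definition Mid (n K m : nat) (e : eqn) : Prop :=
  (D n K e /\ ~ (exists u s, length s = K /\ e = ESum u s)) \/
  e = ESum (fst (pp K m)) (snd (pp K m)) \/
  (K <= n /\ e = ESum Ly (twos K)) \/
  (exists i d, i < m /\ e = EProd (fst (pp K i)) (snd (pp K i) ++ [d])
                                  (fst (pp K (S i))) (snd (pp K (S i)) ++ [d])).

Definition equiv (E F : system) := forall e, E e <-> F e.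

Lemma twos_len i : length (twos i) = i.
Proof. apply repeat_length. Qed.
Lemma ones_len i : length (ones i) = i.
Proof. apply repeat_length. Qed.

Lemma sigma_D n : equiv (sigma n) (D n 0).
Proof.
  intro e; unfold sigma, D; split.
  - intros [i [Hi [H|[H|[H|[H|H]]]]]]; subst e.
    + right; left. exists i. split; [lia|auto].
    + left. eauto.
    + right; right; right. exists i, []. split; [auto|]. split; auto.
    + right; right; left. exists []. split; simpl; auto.
    + right; left. exists (S i). split; [lia|auto].
  - intros [[i [Hi H]]|[[i [Hi H]]|[[s [Hs H]]|[a [t [Ha [Ht H]]]]]]]; subst e.
    + exists i. split; auto.
    + destruct i as [|i].
      * exists 0. split; [lia|auto].
      * exists i. split; [lia|]. right; right; right; right. reflexivity.
    + destruct s; simpl in Hs; [|lia]. exists 0. split; [lia|]. right; right; right; left; auto.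
    + destruct Ht as [Ht|Ht]; [|lia]. subst t. exists a. split; auto.
Qed.

Lemma sink_no_prod n K m w j : ~ Mid n K m (EProd Ly (twos K) w j).
Proof.
  intros [[HD _]|[H|[[_ H]|[i [d [_ H]]]]]]; try discriminate.
  - destruct HD as [[i [_ H]]|[[i [_ H]]|[[s [_ H]]|[a [t [_ [_ H]]]]]]]; try discriminate.
    injection H; intros; now apply twos_ne in H2.
  - injection H; intros. assert (length (twos K) = length (snd (pp K i) ++ [d])) by congruence.
    rewrite length_app, pp_len, twos_len in H4. simpl in H4. lia.
Qed.

Lemma prod_h n K m u s w j : Mid n K m (EProd u s w j) -> length s = K -> (w, j) = hh (u, s).
Proof.
  intros [[HD _]|[H|[[_ H]|[i [d [_ H]]]]]] Hl; try discriminate.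
  - destruct HD as [[i [_ H]]|[[i [_ H]]|[[s' [_ H]]|[a [t [_ [_ H]]]]]]]; try discriminate.
    + injection H; intros; subst. reflexivity.
    + injection H; intros; subst. simpl. now rewrite ff_dec.
  - injection H; intros. subst s. rewrite length_app, pp_len in Hl. simpl in Hl. lia.
Qed.

Lemma D_Mid0 n K : K <= n + 1 -> equiv (D n K) (Mid n K 0).
Proof.
  intros HK e; unfold Mid; split.
  - intro HD. destruct HD as [[i [Hi H]]|[[i [Hi H]]|[[s [Hs H]]|[a [t [Ha [Ht H]]]]]]].
    + destruct (Nat.eq_dec i K) as [->|Hne].
      * right; right; left. split; auto.
      * left. split. { left; eauto. }
        intros [u [s [Hl H']]]. rewrite H in H'. injection H' as _ Hs'. rewrite <- Hs' in Hl.
        rewrite twos_len in Hl. lia.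
    + destruct (Nat.eq_dec i K) as [->|Hne].
      * right; left. subst e. reflexivity.
      * left. split. { right; left; eauto. }
        intros [u [s [Hl H']]]. rewrite H in H'. injection H' as _ Hs'. rewrite <- Hs' in Hl.
        rewrite ones_len in Hl. lia.
    + left. split. { right; right; left; eauto. } intros [u [s' [_ H']]]. congruence.
    + left. split. { right; right; right; eauto 10. } intros [u [s' [_ H']]]. congruence.
  - intros [[HD _]|[H|[[Hn H]|[i [d [Hi _]]]]]]; [auto| | |lia]; subst e.
    + right; left. exists K. split; [lia|reflexivity].
    + left. eauto.
Qed.

Lemma trans_equiv n K m E : m < NN K -> equiv E (Mid n K m) ->
  equiv (sum_transform E (fst (pp K m)) (snd (pp K m)) (fst (pp K (S m))) (snd (pp K (S m))))
        (Mid n K (S m)).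
Proof.
  intros Hm HE e; unfold sum_transform; rewrite (HE e); unfold Mid; split.
  - intros [[HM Hne]|[He|[He|He]]].
    + destruct HM as [HM|[HM|[HM|[i [d [Hi HM]]]]]].
      * left; auto.
      * contradiction.
      * right; right; left; auto.
      * right; right; right. exists i, d. split; [lia|auto].
    + right; left; auto.
    + right; right; right. exists m, d1. split; [lia|auto].
    + right; right; right. exists m, d2. split; [lia|auto].
  - intros [HM|[HM|[HM|[i [d [Hi HM]]]]]].
    + left. split. { left; auto. }
      intro Heq. destruct HM as [_ HM]. apply HM. exists (fst (pp K m)), (snd (pp K m)).
      split; [apply pp_len|auto].
    + right; left; auto.
    + left. split. { right; right; left; auto. }
      destruct HM as [_ HM]. rewrite HM. intro Heq. injection Heq as H1 H2.
      apply (pp_ne K m Hm). destruct (pp K m); simpl in *; subst; auto.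
    + destruct (Nat.eq_dec i m) as [->|Hne].
      * destruct d; [right; right; left|right; right; right]; auto.
      * left. split. { right; right; right. exists i, d. split; [lia|auto]. }
        rewrite HM. discriminate.
Qed.

Lemma peak_info n K m E u s w j : equiv E (Mid n K m) -> peak_at (S K) E u s w j ->
  pp K m <> (Ly, twos K) /\ (u, s) = pp K m /\ (w, j) = pp K (S m).
Proof.
  intros HE [Hs [Hp Hl]]. unfold level in Hl. assert (length s = K) by lia.
  apply HE in Hs; apply HE in Hp.
  destruct Hs as [[_ HM]|[HM|[[_ HM]|[i [d [_ HM]]]]]].
  - exfalso. apply HM. eauto.
  - injection HM as -> ->. rewrite <- surjective_pairing.
    assert (Hne : pp K m <> (Ly, twos K)).
    { intro Heq. rewrite Heq in Hp. simpl in Hp. now apply sink_no_prod in Hp. }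
    split; [auto|split; [auto|]].
    apply prod_h in Hp; [|now rewrite pp_len]. rewrite <- surjective_pairing in Hp.
    rewrite Hp. reflexivity.
  - injection HM as -> ->. exfalso. now apply sink_no_prod in Hp.
  - discriminate.
Qed.

Lemma steps_inv n K E m E' : K <= n + 1 -> equiv E (D n K) -> steps (S K) E m E' ->
  m <= NN K /\ equiv E' (Mid n K m).
Proof.
  intros HK HE Hst. induction Hst as [|m E' u s w j Hst IH Hpk].
  - split; [lia|]. intro e. rewrite (HE e). apply D_Mid0; auto.
  - destruct IH as [Hm HE']. destruct (peak_info _ _ _ _ _ _ _ _ HE' Hpk) as [Hne [H1 H2]].
    assert (m < NN K).
    { destruct (Nat.eq_dec m (NN K)) as [->|]; [|lia]. exfalso. apply Hne. apply pp_N. }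
    split; [lia|].
    replace u with (fst (pp K m)) by (rewrite <- H1; auto).
    replace s with (snd (pp K m)) by (rewrite <- H1; auto).
    replace w with (fst (pp K (S m))) by (rewrite <- H2; auto).
    replace j with (snd (pp K (S m))) by (rewrite <- H2; auto).
    apply trans_equiv; auto.
Qed.

Lemma D_pp_prod n K i : K <= n + 1 -> i < NN K ->
  D n K (EProd (fst (pp K i)) (snd (pp K i)) (fst (pp K (S i))) (snd (pp K (S i)))).
Proof.
  intros HK Hi. destruct (pp_prod K i Hi) as [[s [Hl [H1 H2]]]|[a [t [Hl [H1 H2]]]]];
    rewrite H1, H2; simpl.
  - right; right; left. exists s. split; [lia|auto].
  - right; right; right. exists a, t. split; [lia|]. split; [right; lia|auto].
Qed.

Lemma final_m n K m E : K <= n + 1 -> m <= NN K -> equiv E (Mid n K m) -> no_peak (S K) E ->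
  m = NN K.
Proof.
  intros HK Hm HE Hnp. destruct (Nat.eq_dec m (NN K)) as [|Hne]; auto.
  exfalso. apply Hnp. exists (fst (pp K m)), (snd (pp K m)), (fst (pp K (S m))), (snd (pp K (S m))).
  split; [|split].
  - apply HE. right; left; auto.
  - apply HE. left. split. { apply D_pp_prod; lia. } intros [? [? [_ H]]]; discriminate.
  - unfold level. rewrite pp_len. lia.
Qed.

Lemma Mid_D n K : K <= n -> equiv (Mid n K (NN K)) (D n (S K)).
Proof.
  intros HK e; unfold Mid; split.
  - intros [[HD Hns]|[H|[[_ H]|[i [d [Hi H]]]]]].
    + destruct HD as [[i [Hi H]]|[[i [Hi H]]|[[s [Hs H]]|[a [t [Ha [Ht H]]]]]]].
      * left; eauto.
      * right; left. exists i. split; [|auto].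
        destruct (Nat.eq_dec i K) as [->|]; [|lia].
        exfalso; apply Hns. exists Lx, (ones K). split; [apply ones_len|auto].
      * right; right; left. exists s. split; [lia|auto].
      * right; right; right. exists a, t. split; [auto|]. split; [|auto]. destruct Ht; [left; auto|right; lia].
    + rewrite pp_N in H. simpl in H. left. eauto.
    + left; eauto.
    + subst e. destruct (pp_prod K i Hi) as [[s [Hl [H1 H2]]]|[a [t [Hl [H1 H2]]]]];
        rewrite H1, H2; simpl.
      * right; right; left. exists (s ++ [d]). split; [rewrite length_app; simpl; lia|auto].
      * right; right; right. exists a, (t ++ [d]). split; [lia|].
        split. { right. rewrite length_app. simpl. lia. }
        rewrite <- !app_assoc. reflexivity.
  - intros [[i [Hi H]]|[[i [Hi H]]|[[s [Hs H]]|[a [t [Ha [Ht H]]]]]]].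
    + destruct (Nat.eq_dec i K) as [->|Hne].
      * right; right; left. split; auto.
      * left. split. { left; eauto. }
        intros [u [s [Hl H']]]. rewrite H in H'. injection H' as _ Hs'. rewrite <- Hs' in Hl.
        rewrite twos_len in Hl. lia.
    + left. split. { right; left. exists i. split; [lia|auto]. }
      intros [u [s [Hl H']]]. rewrite H in H'. injection H' as _ Hs'. rewrite <- Hs' in Hl.
      rewrite ones_len in Hl. lia.
    + destruct (Nat.le_gt_cases (length s) K) as [Hle|Hgt].
      * left. split. { right; right; left; eauto. } intros [? [? [_ H']]]; congruence.
      * destruct (exists_last (l := s)) as [s0 [d Hsd]].
        { intro; subst s; simpl in Hgt; lia. }
        subst s. rewrite length_app in Hs, Hgt. simpl in Hs, Hgt.
        destruct (pp_surj_x K s0) as [i [Hi [H1 H2]]]; [lia|].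
        right; right; right. exists i, d. split; [auto|]. rewrite H1, H2. auto.
    + destruct (list_eq_dec (fun x y : digit => ltac:(decide equality)) t []) as [Ht0|Htn].
      { subst t. left. split. { right; right; right. exists a, []. split; [auto|]. split; [left|]; auto. }
        intros [? [? [_ H']]]; congruence. }
      destruct Ht as [Ht|Ht]; [contradiction|].
      destruct (Nat.le_gt_cases (a + 1 + length t) K) as [Hle|Hgt].
      { left. split. { right; right; right. exists a, t. split; [auto|]. split; [right|]; auto. }
        intros [? [? [_ H']]]; congruence. }
      destruct (exists_last (l := t)) as [t0 [d Htd]].
      { exact Htn. }
      subst t. rewrite length_app in Ht, Hgt. simpl in Ht, Hgt.
      destruct (pp_surj_y K (twos a ++ d1 :: t0)) as [i [Hi H1]].
      { rewrite length_app, twos_len. simpl. lia. }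
      { intro Heq. symmetry in Heq. now apply twos_ne in Heq. }
      right; right; right. exists i, d. split; [auto|].
      change (pp K (S i)) with (hh (pp K i)). rewrite H1. simpl. rewrite ff_dec.
      subst e. rewrite <- !app_assoc. reflexivity.
Qed.

Lemma inv n K E : levels_done n K E -> K <= n + 1 -> equiv E (D n K).
Proof.
  intros H; induction H as [|k E m E' Hd IH Hst Hnp]; intros HK.
  - apply sigma_D.
  - specialize (IH ltac:(lia)).
    destruct (steps_inv n k E m E' ltac:(lia) IH Hst) as [Hm HE'].
    pose proof (final_m n k m E' ltac:(lia) Hm HE' Hnp). subst m.
    intro e. rewrite (HE' e). apply Mid_D. lia.
Qed.

Theorem lemma6 (n k : nat) :
  1 <= k < n + 3 ->
  forall E, levels_done n (k - 1) E ->
  forall m E', steps k E m E' ->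
    m <= 2 ^ k - 1 /\ (no_peak k E' -> m = 2 ^ k - 1).
Proof.
  intros Hk E Hd m E' Hst.
  destruct k as [|K]; [lia|]. replace (S K - 1) with K in Hd by lia.
  pose proof (inv n K E Hd ltac:(lia)) as HE.
  destruct (steps_inv n K E m E' ltac:(lia) HE Hst) as [Hm HE'].
  split; [exact Hm|]. intro Hnp. exact (final_m n K m E' ltac:(lia) Hm HE' Hnp).
Qed.
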